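(* Let $A$ be a non-empty set and let $\phi:\ell_\infty(A)\to\mathbb R$ be a linear functional. Define $g_\phi:\ell_\infty(A)\to\mathbb R_+$ by $g_\phi(x^* )=|\phi(|x^*|)|$. Then $g_\phi\in H[\ell_1(A)]_+$ and $\|g_\phi\|_{FBL[\ell_1(A)]}=\sup\{|\phi(x^* )|:x^*\in B_{\ell_\infty(A)}\}$.
   Context: Identify $\ell_1(A)^*$ with $\ell_\infty(A)$. $H[\ell_1(A)]$ is the vector space of positively homogeneous functions $f:\ell_\infty(A)\to\mathbb R$ ($f(\lambda x^* )=\lambda f(x^* )$ for $\lambda>0$), ordered pointwise, with nonnegative cone $H[\ell_1(A)]_+$. For $f\in H[\ell_1(A)]$, $\|f\|_{FBL[\ell_1(A)]}:=\sup\{\sum_{k=1}^n|f(x_k^* )| : n\in\mathbb N,\ x_1^*,\dots,x_n^*\in\ell_\infty(A),\ \sup_{a\in A}\sum_{k=1}^n|x_k^*(a)|\le1\}\in[0,\infty]$. *)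

(* Defs.v *)
From mathcomp Require Import all_boot all_order all_algebra.
From mathcomp Require Import all_classical all_reals all_analysis.
Set Implicit Arguments. Unset Strict Implicit. Unset Printing Implicit Defensive.
Import Order.TTheory GRing.Theory Num.Theory.
Local Open Scope classical_set_scope.
Local Open Scope ring_scope.

(* l_infty(A) is encoded as the bounded functions A -> R. *)
Definition linf_bounded (R : realType) (A : Type) (x : A -> R) : Prop :=
  exists M : R, forall a, `|x a| <= M.

Definition linear_on_linf (R : realType) (A : Type) (phi : (A -> R) -> R) : Prop :=
  forall (x y : A -> R) (s t : R), linf_bounded x -> linf_bounded y ->
    phi (fun a => s * x a + t * y a) = s * phi x + t * phi y.

Definition linf_abs (R : realType) (A : Type) (x : A -> R) : A -> R :=
  fun a => `|x a|.

Definition g_phi (R : realType) (A : Type) (phi : (A -> R) -> R) : (A -> R) -> R :=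
  fun x => `| phi (linf_abs x) |.

Definition pos_homogeneous (R : realType) (A : Type) (f : (A -> R) -> R) : Prop :=
  forall (x : A -> R) (l : R), linf_bounded x -> 0 < l ->
    f (fun a => l * x a) = l * f x.

Definition in_H_plus (R : realType) (A : Type) (f : (A -> R) -> R) : Prop :=
  pos_homogeneous f /\ (forall x : A -> R, linf_bounded x -> 0 <= f x).

Definition fbl_norm (R : realType) (A : Type) (f : (A -> R) -> R) : \bar R :=
  ereal_sup [set e : \bar R | exists (n : nat) (xs : 'I_n -> A -> R),
      [/\ (0 < n)%N, (forall k, linf_bounded (xs k)),
          (forall a : A, \sum_(k < n) `|xs k a| <= 1) &
          e = (\sum_(k < n) `|f (xs k)|)%:E]].

Definition sup_ball (R : realType) (A : Type) (phi : (A -> R) -> R) : \bar R :=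
  ereal_sup [set e : \bar R | exists x : A -> R,
      [/\ linf_bounded x, (forall a, `|x a| <= 1) & e = (`| phi x |)%:E]].

(* Main.v *)
Require Import Defs.
From mathcomp Require Import all_boot all_order all_algebra.
From mathcomp Require Import all_classical all_reals all_analysis.
From mathcomp Require Import ring lra.
Import Order.TTheory GRing.Theory Num.Theory.
Local Open Scope classical_set_scope.
Local Open Scope ring_scope.

Section Aux.
Variables (R : realType) (A : Type) (phi : (A -> R) -> R).
Hypothesis hphi : linear_on_linf phi.

Lemma bnd_comb (x y : A -> R) s t : linf_bounded x -> linf_bounded y ->
  linf_bounded (fun a => s * x a + t * y a).
Proof.
move=> [M hM] [N hN]; exists (`|s| * M + `|t| * N) => a.
apply: (le_trans (ler_normD _ _)); rewrite !normrM.
by apply: lerD; apply: ler_wpM2l => //.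
Qed.

Lemma phi0 : phi (fun _ => 0) = 0.
Proof.
have b0 : linf_bounded (fun _ : A => (0:R)) by exists 0 => a; rewrite normr0.
have := hphi _ _ 0 0 b0 b0.
have -> : (fun _ : A => (0:R) * 0 + 0 * 0) = (fun _ => (0:R)).
  by apply: funext => a; rewrite mulr0 addr0.
by rewrite !mul0r addr0.
Qed.

Lemma phi_sum n (xs : 'I_n -> A -> R) (c : 'I_n -> R) :
  (forall k, linf_bounded (xs k)) ->
  linf_bounded (fun a => \sum_(k < n) c k * xs k a) /\
  phi (fun a => \sum_(k < n) c k * xs k a) = \sum_(k < n) c k * phi (xs k).
Proof.
elim: n xs c => [|n IH] xs c hb.
  have -> : (fun a : A => \sum_(k < 0) c k * xs k a) = (fun _ => 0).
    by apply: funext => a; rewrite big_ord0.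
  by rewrite big_ord0 phi0; split => //; exists 0 => a; rewrite normr0.
have [b1 e1] := IH (fun k => xs (widen_ord (leqnSn n) k))
   (fun k => c (widen_ord (leqnSn n) k)) (fun k => hb _).
have -> : (fun a => \sum_(k < n.+1) c k * xs k a) =
  (fun a => 1 * (\sum_(k < n) c (widen_ord (leqnSn n) k) * xs (widen_ord (leqnSn n) k) a)
            + c ord_max * xs ord_max a).
  by apply: funext => a; rewrite big_ord_recr /= mul1r.
split; first exact: bnd_comb.
by rewrite hphi // e1 mul1r big_ord_recr.
Qed.

End Aux.

Theorem lemma4p6 (R : realType) (A : Type) (hA : inhabited A)
  (phi : (A -> R) -> R) (hphi : linear_on_linf phi) :
  in_H_plus (g_phi phi) /\ fbl_norm (g_phi phi) = sup_ball phi.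
Proof.
have babs : forall x : A -> R, linf_bounded x -> linf_bounded (linf_abs x).
  by move=> x [M hM]; exists M => a; rewrite /linf_abs normr_id.
split.
  split; last by move=> x _; rewrite /g_phi.
  move=> x l bx lgt0; rewrite /g_phi.
  have -> : linf_abs (fun a => l * x a) = (fun a => l * linf_abs x a + 0 * linf_abs x a).
    apply: funext => a; rewrite /linf_abs mul0r addr0 normrM gtr0_norm //.
  by rewrite hphi; [rewrite mul0r addr0 normrM gtr0_norm|exact: babs|exact: babs].
rewrite /fbl_norm /sup_ball; apply/eqP; rewrite eq_le; apply/andP; split.
- apply: ge_ereal_sup => _ [n [xs [n0 hb hs ->]]].
  pose eps k : R := if 0 <= phi (linf_abs (xs k)) then 1 else -1.
  have heps : forall k, eps k * phi (linf_abs (xs k)) = `|phi (linf_abs (xs k))|.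
    move=> k; rewrite /eps; case: ifP => h.
      by rewrite mul1r ger0_norm.
    by rewrite mulN1r ltr0_norm // ltNge h.
  have neps : forall k, `|eps k| = 1.
    by move=> k; rewrite /eps; case: ifP; rewrite ?normrN normr1.
  have [bs es] := @phi_sum _ _ _ hphi _ (fun k => linf_abs (xs k)) eps (fun k => babs _ (hb k)).
  apply: ereal_sup_ubound; exists (fun a => \sum_(k < n) eps k * linf_abs (xs k) a).
  split => //.
    move=> a; apply: (le_trans (ler_norm_sum _ _ _)); apply: le_trans (hs a).
    by apply: ler_sum => k _; rewrite normrM neps mul1r /linf_abs normr_id.
  rewrite es; congr (_%:E); rewrite ger0_norm; last first.
    by apply: sumr_ge0 => k _; rewrite heps.
  by apply: eq_bigr => k _; rewrite /g_phi normr_id heps.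
- apply: ge_ereal_sup => _ [x [bx hx ->]].
  pose xp := fun a => (`|x a| + x a) / 2.
  pose xm := fun a => (`|x a| - x a) / 2.
  pose xs := fun k : 'I_2 => if val k == 0%N then xp else xm.
  have bxp : linf_bounded xp.
    have := @bnd_comb _ _ _ _ (2^-1) (2^-1) (babs _ bx) bx.
    by congr linf_bounded; apply: funext => a; rewrite /xp /linf_abs mulrDl mulrC [_ * x a]mulrC.
  have bxm : linf_bounded xm.
    have := @bnd_comb _ _ _ _ (2^-1) (- 2^-1) (babs _ bx) bx.
    by congr linf_bounded; apply: funext => a; rewrite /xm /linf_abs mulrBl mulrC [_ * x a]mulrC mulrN.
  have xp0 : forall a, 0 <= xp a.
    by move=> a; rewrite /xp divr_ge0 // -lerBlDr sub0r ler_normr lexx orbT.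
  have xm0 : forall a, 0 <= xm a.
    by move=> a; rewrite /xm divr_ge0 // subr_ge0 ler_norm.
  have axp : linf_abs xp = xp by apply: funext => a; rewrite /linf_abs ger0_norm.
  have axm : linf_abs xm = xm by apply: funext => a; rewrite /linf_abs ger0_norm.
  have dx : x = (fun a => 1 * xp a + (-1) * xm a).
    apply: funext => a; rewrite /xp /xm; lra.
  apply: le_trans (ereal_sup_ubound _).
    2: { exists 2%N, xs; split => //.
         - by case=> [[|[|]]] //= _; rewrite /xs /=.
         - move=> a; rewrite big_ord_recr big_ord1 /xs /= !ger0_norm //.
           have := hx a; rewrite /xp /xm; lra. }
  rewrite big_ord_recr big_ord1 /xs /= /g_phi axp axm lee_fin.
  rewrite {1}dx hphi // mul1r mulN1r.
  by rewrite !normr_id ler_normB.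
Qed.
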